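(* Let $V$ be a commutative unital quantale whose underlying lattice is a frame, with $\otimes=\wedge$ in $V$. Let $(X,a)$, $(Y,b)$ be $V$-groups with $(Y,b)$ symmetric, $\varphi\colon Y\to\mathrm{Aut}(X)$ a group action, and $c$ a $V$-category structure on $X\rtimes_\varphi Y$ such that $(X,a)\xrightarrow{\langle 1,0\rangle}(X\rtimes_\varphi Y,c)\underset{\langle 0,1\rangle}{\overset{\pi_2}{\rightleftarrows}}(Y,b)$ is a split extension in $\mathsf{VGrp}$. Then $c=a\otimes b=a\wedge b$, i.e. $c((x,y),(x',y'))=a(x,x')\wedge b(y,y')$ for all $x,x'\in X$, $y,y'\in Y$.
   Context: A commutative unital quantale $V$ is a complete lattice with a commutative associative operation $\otimes$ with unit $k$ preserving arbitrary joins in each variable; here $\otimes=\wedge$, so $k=\top$. A $V$-category $(X,a)$: $a\colon X\times X\to V$ with $k\le a(x,x)$ and $a(x,x')\otimes a(x',x'')\le a(x,x'')$; it is symmetric if $a(x,x')=a(x',x)$. A $V$-functor is a map $f$ with $a(x,x')\le b(f(x),f(x'))$. A $V$-group $(X,a,+)$ is a $V$-category with a group structure (additive, not necessarily abelian) such that $a(x_1,x_2)\otimes a(x_1',x_2')\le a(x_1+x_1',x_2+x_2')$; $V$-homomorphisms are group homomorphisms that are $V$-functors; category $\mathsf{VGrp}$ (pointed). The semidirect product $X\rtimes_\varphi Y$ is $X\times Y$ with $(x,y)+(x',y')=(x+\varphi_y(x'),y+y')$, $\varphi_y=\varphi(y)$; $\langle 1,0\rangle(x)=(x,0)$, $\langle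 0,1\rangle(y)=(0,y)$, $\pi_2(x,y)=y$. A split extension in $\mathsf{VGrp}$ means: the middle object is a $V$-group, all three maps are $V$-homomorphisms, $\pi_2\circ\langle 0,1\rangle=1_Y$, and $\langle 1,0\rangle$ is a kernel of $\pi_2$ in $\mathsf{VGrp}$. *)

(* Defs.v *)
From HB Require Import structures.
From mathcomp Require Import all_boot all_order.
Set Implicit Arguments. Unset Strict Implicit. Unset Printing Implicit Defensive.
Import Order.TTheory.
Local Open Scope order_scope.

Section Frame.
Context {d : Order.disp_t} (V : tbLatticeType d).

Definition is_lub (S : V -> Prop) (s : V) : Prop :=
  (forall x, S x -> x <= s) /\ (forall u, (forall x, S x -> x <= u) -> s <= u).

(* V is a frame: complete lattice in which binary meet distributes over
   arbitrary joins, i.e. (V, /\, \top) is a commutative unital quantale. *)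
Definition is_frame : Prop :=
  (forall S : V -> Prop, exists s, is_lub S s) /\
  (forall (t : V) (S : V -> Prop) (s : V), is_lub S s ->
     is_lub (fun u => exists x, S x /\ u = t `&` x) (t `&` s)).

(* V-category with tensor = meet and unit k = \top *)
Definition Vcat (X : Type) (a : X -> X -> V) : Prop :=
  (forall x, \top <= a x x) /\
  (forall x x' x'', a x x' `&` a x' x'' <= a x x'').

Definition Vsymmetric (X : Type) (a : X -> X -> V) : Prop :=
  forall x x', a x x' = a x' x.

Definition Vfunctor (X Y : Type) (a : X -> X -> V) (b : Y -> Y -> V)
  (f : X -> Y) : Prop :=
  forall x x', a x x' <= b (f x) (f x').
End Frame.

(* group axioms (additive notation, not necessarily abelian) *)
Definition group_ax (X : Type) (add : X -> X -> X) (zero : X) (opp : X -> X)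
  : Prop :=
  (forall x y z, add x (add y z) = add (add x y) z) /\
  (forall x, add zero x = x) /\ (forall x, add x zero = x) /\
  (forall x, add (opp x) x = zero) /\ (forall x, add x (opp x) = zero).

Definition group_hom (X Y : Type) (addX : X -> X -> X) (addY : Y -> Y -> Y)
  (f : X -> Y) : Prop :=
  forall x x', f (addX x x') = addY (f x) (f x').

Definition Vgroup {d} (V : tbLatticeType d) (X : Type) (add : X -> X -> X)
  (zero : X) (opp : X -> X) (a : X -> X -> V) : Prop :=
  group_ax add zero opp /\ Vcat a /\
  (forall x1 x2 x1' x2', a x1 x2 `&` a x1' x2' <= a (add x1 x1') (add x2 x2')).

Definition Vhom {d} (V : tbLatticeType d) (X Y : Type)
  (addX : X -> X -> X) (a : X -> X -> V) (addY : Y -> Y -> Y) (b : Y -> Y -> V)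
  (f : X -> Y) : Prop :=
  group_hom addX addY f /\ Vfunctor a b f.

Definition group_aut (X : Type) (add : X -> X -> X) (g : X -> X) : Prop :=
  group_hom add add g /\ bijective g.

Definition group_action (X Y : Type) (addX : X -> X -> X) (addY : Y -> Y -> Y)
  (phi : Y -> X -> X) : Prop :=
  (forall y, group_aut addX (phi y)) /\
  (forall y y' x, phi (addY y y') x = phi y (phi y' x)).

Definition sd_add (X Y : Type) (addX : X -> X -> X) (addY : Y -> Y -> Y)
  (phi : Y -> X -> X) (p q : X * Y) : X * Y :=
  (addX p.1 (phi p.2 q.1), addY p.2 q.2).
Definition sd_zero (X Y : Type) (zeroX : X) (zeroY : Y) : X * Y := (zeroX, zeroY).
Definition sd_opp (X Y : Type) (oppX : X -> X) (oppY : Y -> Y)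
  (phi : Y -> X -> X) (p : X * Y) : X * Y :=
  (phi (oppY p.2) (oppX p.1), oppY p.2).

(* k : (K,e) -> (M,c) is a kernel of p : (M,c) -> (Q,b) in VGrp
   (the zero morphism into (Q,b) being constant at zeroQ). *)
Definition is_kernel_VGrp {dV} (V : tbLatticeType dV)
  (K : Type) (addK : K -> K -> K) (e : K -> K -> V)
  (M : Type) (addM : M -> M -> M) (c : M -> M -> V)
  (Q : Type) (zeroQ : Q)
  (k : K -> M) (p : M -> Q) : Prop :=
  (forall z, p (k z) = zeroQ) /\
  (forall (Z : Type) (addZ : Z -> Z -> Z) (zeroZ : Z) (oppZ : Z -> Z)
          (dz : Z -> Z -> V),
     Vgroup addZ zeroZ oppZ dz ->
     forall f : Z -> M, Vhom addZ dz addM c f ->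
     (forall z, p (f z) = zeroQ) ->
     exists g : Z -> K, Vhom addZ dz addK e g /\ (forall z, k (g z) = f z) /\
       (forall g' : Z -> K, Vhom addZ dz addK e g' ->
          (forall z, k (g' z) = f z) -> g' = g)).

(* Main.v *)
Require Import Defs.
From HB Require Import structures.
From mathcomp Require Import all_boot all_order.
Local Open Scope order_scope.
Import Order.TTheory.

Theorem proposition7p7 {d : Order.disp_t} (V : tbLatticeType d)
  (hV : is_frame V)
  (X : Type) (addX : X -> X -> X) (zeroX : X) (oppX : X -> X) (a : X -> X -> V)
  (Y : Type) (addY : Y -> Y -> Y) (zeroY : Y) (oppY : Y -> Y) (b : Y -> Y -> V)
  (hX : Vgroup addX zeroX oppX a) (hY : Vgroup addY zeroY oppY b)
  (hYsym : Vsymmetric b)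
  (phi : Y -> X -> X) (hphi : group_action addX addY phi)
  (c : X * Y -> X * Y -> V)
  (hc : Vgroup (sd_add addX addY phi) (sd_zero zeroX zeroY)
               (sd_opp oppX oppY phi) c)
  (h10 : Vhom addX a (sd_add addX addY phi) c (fun x => (x, zeroY)))
  (hpi2 : Vhom (sd_add addX addY phi) c addY b (fun p => p.2))
  (h01 : Vhom addY b (sd_add addX addY phi) c (fun y => (zeroX, y)))
  (hsplit : forall y : Y, ((zeroX, y) : X * Y).2 = y)
  (hker : is_kernel_VGrp addX a (sd_add addX addY phi) c zeroY
            (fun x => (x, zeroY)) (fun p => p.2)) :
  forall (x x' : X) (y y' : Y), c (x, y) (x', y') = a x x' `&` b y y'.
Proof.
move: hX hY hc hphi => [[XA [X0l [X0r [XNl XNr]]]] [[Xr Xt] Xc]]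
  [[YA [Y0l [Y0r [YNl YNr]]]] [[Yr Yt] Yc]] [_ [[Cr Ct] Cc]] [haut hphiM].
have Y00 : addY zeroY zeroY = zeroY by apply: Y0l.
have phi0 : forall x, phi zeroY x = x.
  move=> x; have [_ Hb] := haut zeroY; case: Hb => g gK Kg.
  apply: (can_inj gK); by rewrite -hphiM Y00.
have phiy0 : forall y, phi y zeroX = zeroX.
  move=> y; have [hm _] := haut y.
  have E : phi y zeroX = addX (phi y zeroX) (phi y zeroX) by rewrite -hm X0l.
  have : addX (oppX (phi y zeroX)) (phi y zeroX) =
         addX (oppX (phi y zeroX)) (addX (phi y zeroX) (phi y zeroX)) by rewrite -E.
  by rewrite XA XNl X0l.
have hA : forall x x', c (x, zeroY) (x', zeroY) = a x x'.
  move=> x x'; apply/le_anti; apply/andP; split; last by apply: h10.2.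
  have [_ ku] := hker.
  have Hg : Vgroup addX zeroX oppX (fun x x' => c (x, zeroY) (x', zeroY)).
    split; first by split.
    split; first by split => [z|z z' z'']; [apply: Cr|apply: Ct].
    move=> x1 x2 x1' x2'; have := Cc (x1, zeroY) (x2, zeroY) (x1', zeroY) (x2', zeroY).
    by rewrite /sd_add /= !phi0 Y00.
  have Hf : Vhom addX (fun x x' => c (x, zeroY) (x', zeroY)) (sd_add addX addY phi) c
              (fun x => (x, zeroY)).
    split => // z z'; by rewrite /sd_add /= phi0 Y00.
  have [g [[_ gF] [gk _]]] := ku X addX zeroX oppX _ Hg _ Hf (fun _ => erefl).
  have gid : forall z, g z = z by move=> z; have := gk z; case.
  by have := gF x x'; rewrite !gid.
have hB : forall y y', b y y' <= b (oppY y) (oppY y').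
  move=> y y'.
  have := Yc (addY (oppY y) y') (addY (oppY y) y) (oppY y') (oppY y').
  have E1 : addY (addY (oppY y) y') (oppY y') = oppY y by rewrite -YA YNr Y0r.
  have E2 : addY (addY (oppY y) y) (oppY y') = oppY y' by rewrite YNl Y0l.
  rewrite E1 E2 => H; apply: le_trans H.
  rewrite lexI (le_trans _ (Yr _)) ?lexI ?lex1 //= andbT.
  have := Yc (oppY y) (oppY y) y' y; apply: le_trans.
  by rewrite lexI (le_trans _ (Yr _)) ?lex1 //= hYsym.
move=> x x' y y'; apply/le_anti; apply/andP; split.
- rewrite lexI (hpi2.2 (x, y) (x', y')) andbT -hA.
  have := Cc (x, y) (x', y') (zeroX, oppY y) (zeroX, oppY y').
  rewrite /sd_add /= !phiy0 !X0r !YNr; apply: le_trans.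
  rewrite lexI lexx /=; apply: le_trans (h01.2 _ _).
  by apply: le_trans (hB _ _); exact: (hpi2.2 (x, y) (x', y')).
- have := Cc (x, zeroY) (x', zeroY) (zeroX, y) (zeroX, y').
  rewrite /sd_add /= !phi0 !X0r !Y0l hA; apply: le_trans.
  by apply: leI2 => //; apply: h01.2.
Qed.
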